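(* For any finite alphabet $\mathfrak{G}$ and any $\mathfrak{G}$-trees $\mathfrak{s}$, $\mathfrak{t}$ such that $\mathfrak{s}\preceq\mathfrak{t}$, the interval $[\mathfrak{s},\mathfrak{t}]$ of the $\mathfrak{G}$-prefix poset is isomorphic as a lattice to $J(P_s)$, where $s := \mathrm{sh}(\lozenge_{|\mathfrak{s}|}[\mathfrak{t}\setminus\mathfrak{s}])$.
   Context: $\mathfrak{G}$ is a finite alphabet (letters with arities $\geq 1$). A $\mathfrak{G}$-tree is either the leaf (the tree with no internal node) or a root decorated by a letter $\mathtt{a}\in\mathfrak{G}$ with $|\mathtt{a}|$ children that are $\mathfrak{G}$-trees; $|\mathfrak{s}|$ is the number of leaves. The $\mathfrak{G}$-prefix poset is the set of $\mathfrak{G}$-trees ordered by $\mathfrak{s}\preceq\mathfrak{t}$ iff $\mathfrak{t}$ is obtained by grafting $\mathfrak{G}$-trees $\mathfrak{r}_1,\dots,\mathfrak{r}_{|\mathfrak{s}|}$ onto the leaves of $\mathfrak{s}$ (left to right); then $\mathfrak{t}\setminus\mathfrak{s} := (\mathfrak{r}_1,\dots,\mathfrak{r}_{|\mathfrak{s}|})$, and its intervals are lattices (with meet = largest common part from the root and join = superimposition). $\lozenge_k[\mathfrak{r}_1,\dots,\mathfrak{r}_k]$ is the tree with root decorated by a new letter $\lozenge_k$ of arity $k$ and children $\mathfrak{r}_1,\dots,\mathfrak{r}_k$. A shadow is a finite (possibly empty) multiset of shadows, i.e. a nonplanar undecorated rooted tree. For a tree $\mathfrak{t}$ different from the leaf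 with root of arity $k$, $\mathrm{sh}(\mathfrak{t})$ is the multiset of the $\mathrm{sh}(\mathfrak{t}(i))$ over those $i\in[k]$ such that the $i$-th subtree $\mathfrak{t}(i)$ is not the leaf. For a shadow $s$, $P_s$ is the poset on the nodes of $s$ other than its root, where $u<v$ iff $u$ is an ancestor of $v$. For a poset $P$, $J(P)$ is the lattice of order ideals (down-closed subsets) of $P$ ordered by inclusion, with intersection and union as meet and join. *)

(* Defs.v *)
From mathcomp Require Import all_boot.
Set Implicit Arguments. Unset Strict Implicit. Unset Printing Implicit Defensive.

Inductive tree (L : Type) : Type :=
| Leaf : tree L
| Node : L -> seq (tree L) -> tree L.
Arguments Leaf {L}.

Section Trees.
Variables (L : Type) (ar : L -> nat).

Fixpoint wf (t : tree L) : bool :=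
  match t with
  | Leaf => true
  | Node a cs => (size cs == ar a) && all wf cs
  end.

Fixpoint nleaves (t : tree L) : nat :=
  match t with
  | Leaf => 1
  | Node _ cs => sumn (map nleaves cs)
  end.

Fixpoint graft (s : tree L) (rs : seq (tree L)) : tree L :=
  match s with
  | Leaf => head Leaf rs
  | Node a cs =>
      Node a ((fix go (cs : seq (tree L)) (rs : seq (tree L)) :=
                 match cs with
                 | [::] => [::]
                 | c :: cs' => graft c (take (nleaves c) rs)
                                 :: go cs' (drop (nleaves c) rs)
                 end) cs rs)
  end.

(* prefix order: s <= t iff t is obtained by grafting G-trees r_1..r_|s|
   onto the leaves of s; then t \ s = (r_1, ..., r_|s|). *)
Definition is_diff (s t : tree L) (rs : seq (tree L)) : Prop :=
  [/\ size rs = nleaves s, all wf rs & graft s rs = t].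

Definition tprefix (s t : tree L) : Prop := exists rs, is_diff s t rs.

Definition interval (s t u : tree L) : Prop :=
  [/\ wf u, tprefix s u & tprefix u t].

End Trees.

Fixpoint tmap (L L' : Type) (g : L -> L') (t : tree L) : tree L' :=
  match t with
  | Leaf => Leaf
  | Node a cs => Node (g a) (map (tmap g) cs)
  end.

(* lozenge_k [r_1, ..., r_k] : root decorated by a new letter (None) of
   arity k = size rs, with children r_1, ..., r_k. *)
Definition diamond (L : Type) (rs : seq (tree L)) : tree (option L) :=
  Node None (map (tmap Some) rs).

(* A shadow is represented by a planar undecorated rooted tree; the order
   of children is irrelevant for everything below (J(P_s) is invariant). *)
Inductive shadow : Type := SNode of seq shadow.

(* sh(t) for t not the leaf: the (multi)set of sh(t(i)) over the non-leaf
   children t(i). (The value on the leaf is an unused dummy.) *)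
Fixpoint sh (L : Type) (t : tree L) : shadow :=
  match t with
  | Leaf => SNode [::]
  | Node _ cs =>
      SNode ((fix go (cs : seq (tree L)) :=
                match cs with
                | [::] => [::]
                | Leaf :: cs' => go cs'
                | c :: cs' => sh c :: go cs'
                end) cs)
  end.

Definition schildren (s : shadow) : seq shadow := let: SNode ss := s in ss.

(* nodes of a shadow are addressed by paths from the root; [::] = root *)
Fixpoint snode (s : shadow) (p : seq nat) {struct p} : bool :=
  match p with
  | [::] => true
  | i :: p' => (i < size (schildren s)) &&
               snode (nth (SNode [::]) (schildren s) i) p'
  end.

(* P_s: elements = non-root nodes of s; u <= v iff u is an ancestor of v
   (or u = v), i.e. the path of u is a prefix of the path of v. *)
Definition Ps_elt (s : shadow) (p : seq nat) : bool := (p != [::]) && snode s p.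
Definition Ps_le (u v : seq nat) : bool := prefix u v.

Definition is_ideal (s : shadow) (I : pred (seq nat)) : Prop :=
  (forall p, I p -> Ps_elt s p) /\
  (forall u v, I v -> Ps_elt s u -> Ps_le u v -> I u).

(* The poset (D, le) is isomorphic to J(P_s): an order isomorphism
   (bijection, monotone in both directions) onto the order ideals of P_s
   ordered by inclusion; ideals are identified up to extensional equality. *)
Definition iso_to_J (T : Type) (D : T -> Prop) (le : T -> T -> Prop)
    (s : shadow) : Prop :=
  exists f : T -> pred (seq nat),
    [/\ forall u, D u -> is_ideal s (f u),
        forall u v, D u -> D v -> (le u v <-> {subset f u <= f v}) &
        forall I, is_ideal s I -> exists2 u, D u & f u =i I].

(* Main.v *)
From Stdlib Require List.
Require Import Defs.
From mathcomp Require Import all_boot.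
Set Implicit Arguments. Unset Strict Implicit. Unset Printing Implicit Defensive.

Section Gen.
Variable L : Type.
Implicit Types (t u r : tree L) (us rs cs : seq (tree L)).

Definition nonleaf t := if t is Node _ _ then true else false.
Definition children t := if t is Node _ cs then cs else [::].

Definition tree_ind2 (P : tree L -> Prop) (HL : P Leaf)
  (HN : forall a cs, (forall c, List.In c cs -> P c) -> P (Node a cs)) :=
  fix F (t : tree L) : P t :=
  match t with
  | Leaf => HL
  | Node a cs => HN a cs ((fix G (cs : seq (tree L)) : forall c, List.In c cs -> P c :=
      match cs with
      | nil => fun c (H : List.In c nil) => False_ind _ H
      | cons c' cs' => fun c H => match H with
                         | or_introl e => eq_ind c' P (F c') c e
                         | or_intror H' => G cs' c H' end
      end) cs)
  end.

Lemma forest_ind (Q : seq (tree L) -> Prop) :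
  (forall rs, (forall r, List.In r rs -> Q (children r)) -> Q rs) -> forall rs, Q rs.
Proof.
move=> step.
have H : forall t, Q (children t).
  elim/tree_ind2 => [|a cs IH] /=; first by apply: step.
  by apply: step.
by move=> rs; apply: step => r _; apply: H.
Qed.

Lemma nth_In cs i : i < size cs -> List.In (nth Leaf cs i) cs.
Proof. elim: cs i => [|c cs IH] [|i] //= Hi; [by left | by right; apply: IH]. Qed.

Fixpoint pick (f : tree L -> tree L -> bool) us rs j : bool :=
  match us, rs with
  | u :: us', r :: rs' => if nonleaf r then (if j is j'.+1 then pick f us' rs' j' else f u r)
                          else pick f us' rs' j
  | _, _ => false
  end.

Fixpoint ix rs j : nat :=
  match rs with
  | [::] => 0
  | r :: rs' => if nonleaf r then (if j is j'.+1 then (ix rs' j').+1 else 0) else (ix rs' j).+1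
  end.

Lemma pickE f us rs j : size us = size rs ->
  pick f us rs j = (j < count nonleaf rs) && f (nth Leaf us (ix rs j)) (nth Leaf rs (ix rs j)).
Proof.
elim: rs us j => [|r rs IH] [|u us] j //= [Hs].
case: r => [|a cs] /=; first by rewrite IH.
by case: j => [|j] //=; rewrite IH.
Qed.

Lemma ix1 rs j : j < count nonleaf rs ->
  [/\ ix rs j < size rs, nonleaf (nth Leaf rs (ix rs j)) & count nonleaf (take (ix rs j) rs) = j].
Proof.
elim: rs j => [|r rs IH] j //=.
case: r => [|a cs] /=.
  by move=> /IH [H1 H2 H3]; split.
case: j => [|j] //= /IH [H1 H2 H3]; split => //.
by rewrite H3.
Qed.

Lemma ix2 rs i : i < size rs -> nonleaf (nth Leaf rs i) ->
  ix rs (count nonleaf (take i rs)) = i /\ count nonleaf (take i rs) < count nonleaf rs.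
Proof.
elim: rs i => [|r rs IH] i //=.
case: i => [|i] /=.
  by move=> _ ->.
move=> Hi /(IH _ Hi) [H1 H2].
by case: r => [|a cs] /=; rewrite H1.
Qed.

Fixpoint fin us rs (p : seq nat) {struct p} : bool :=
  match p with
  | [::] => false
  | j :: p' => pick (fun u r => nonleaf u && ((p' == [::]) || fin (children u) (children r) p')) us rs j
  end.

Lemma finE us rs j p : size us = size rs ->
  fin us rs (j :: p) = (j < count nonleaf rs) &&
    (nonleaf (nth Leaf us (ix rs j)) &&
     ((p == [::]) || fin (children (nth Leaf us (ix rs j))) (children (nth Leaf rs (ix rs j))) p)).
Proof. by move=> Hs /=; rewrite pickE. Qed.

Fixpoint shs cs : seq shadow :=
  match cs with
  | [::] => [::]
  | Leaf :: cs' => shs cs'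
  | c :: cs' => sh c :: shs cs'
  end.

Lemma shE a cs : sh (Node a cs) = SNode (shs cs).
Proof. by []. Qed.

Lemma snode_shs rs j p : snode (SNode (shs rs)) (j :: p) = pick (fun _ r => snode (sh r) p) rs rs j.
Proof.
elim: rs j => [|r rs IH] j //=.
case: r => [|a cs] /=; first by rewrite -IH.
by case: j.
Qed.

Lemma link rs p : Ps_elt (SNode (shs rs)) p = fin rs rs p.
Proof.
elim: p rs => [|j p IH] rs //.
rewrite /Ps_elt /=.
have := snode_shs rs j p => /= ->; rewrite !pickE //.
case: (ltnP j (count nonleaf rs)) => //= /ix1 [_ H2 _].
case: (nth Leaf rs (ix rs j)) H2 => [|a cs] //= _.
case: p IH => [|k q] IH //.
by rewrite -IH /Ps_elt.
Qed.

End Gen.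

Lemma sh_tmap (L L' : Type) (g : L -> L') (t : tree L) : sh (tmap g t) = sh t.
Proof.
elim/tree_ind2: t => [|a cs IH] //.
change (SNode (shs (map (tmap g) cs)) = SNode (shs cs)); congr SNode.
elim: cs IH => [|c cs IHc] IH //=.
rewrite IHc; last by move=> x Hx; apply: IH; right.
case: c IH => [|b ds] IH //.
have E := IH (Node b ds) (or_introl erefl).
change (sh (tmap g (Node b ds)) :: shs cs = sh (Node b ds) :: shs cs).
by rewrite E.
Qed.

Lemma sh_diamond (L : Type) (rs : seq (tree L)) : sh (diamond rs) = SNode (shs rs).
Proof.
change (SNode (shs (map (tmap Some) rs)) = SNode (shs rs)); congr SNode.
elim: rs => [|r rs IH] //=.
case: r => [|b ds] //.
have E := sh_tmap Some (Node b ds).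
change (sh (tmap Some (Node b ds)) :: shs [seq tmap Some i | i <- rs] = sh (Node b ds) :: shs rs).
by rewrite E IH.
Qed.

Section All2.
Variables (S T : Type) (f : S -> T -> bool).
Lemma all2_size s t : all2 f s t -> size s = size t.
Proof. by elim: s t => [|x s IH] [|y t] //= /andP [_ /IH ->]. Qed.
Lemma all2_nth x y s t i : all2 f s t -> i < size s -> f (nth x s i) (nth y t i).
Proof. by elim: s t i => [|a s IH] [|b t] [|i] //= /andP [H1 H2] Hi; auto. Qed.
Lemma all2_nthP x y s t : size s = size t ->
  (forall i, i < size s -> f (nth x s i) (nth y t i)) -> all2 f s t.
Proof.
elim: s t => [|a s IH] [|b t] //= [Hs] H.
by rewrite (H 0) //= IH // => i Hi; apply: (H i.+1).
Qed.
Lemma all2_cat s1 s2 t1 t2 : size s1 = size t1 ->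
  all2 f (s1 ++ s2) (t1 ++ t2) = all2 f s1 t1 && all2 f s2 t2.
Proof. by elim: s1 t1 => [|a s IH] [|b t] //= [Hs]; rewrite IH // andbA. Qed.
End All2.
Arguments all2_nth {S T f} x y {s t} i.
Arguments all2_nthP {S T f} x y {s t}.

Section Pre.
Variables (A : eqType) (ar : A -> nat).
Implicit Types (t u v r : tree A) (us vs rs cs ds : seq (tree A)).

Fixpoint pre u r : bool :=
  match u with
  | Leaf => wf ar r
  | Node a cs => match r with
                 | Leaf => false
                 | Node b ds => (a == b) &&
                     (fix go cs ds := match cs, ds with
                                      | [::], [::] => true
                                      | c :: cs', d :: ds' => pre c d && go cs' ds'
                                      | _, _ => false end) cs ds
                 end
  end.

Lemma preE a cs b ds : pre (Node a cs) (Node b ds) = (a == b) && all2 pre cs ds.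
Proof. rewrite /=; congr andb; by elim: cs ds => [|c cs IH] [|d ds] //=; rewrite IH. Qed.

Lemma pre_leafr u : pre u Leaf -> u = Leaf.
Proof. by case: u. Qed.

Lemma pre_nodel a cs r : pre (Node a cs) r -> exists ds, r = Node a ds /\ all2 pre cs ds.
Proof. case: r => [|b ds] //; rewrite preE => /andP [/eqP <- H]; by exists ds. Qed.

Lemma pre_wf u r : pre u r -> wf ar r -> wf ar u.
Proof.
elim/tree_ind2: u r => [|a cs IH] r //.
move=> /pre_nodel [ds [-> H]] /= /andP [/eqP Hs Hw].
rewrite -Hs (all2_size H) eqxx /=.
elim: cs ds IH H Hw {Hs} => [|c cs IHc] [|d ds] //= IH /andP [H1 H2] /andP [W1 W2].
rewrite (IH c (or_introl erefl) d H1 W1) /=.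
by apply: (IHc ds) => // x Hx; apply: IH; right.
Qed.

Lemma fin_sub p us rs : all2 pre us rs -> fin us rs p -> fin rs rs p.
Proof.
elim: p us rs => [|j p IH] us rs Hall //.
have Hs := all2_size Hall.
rewrite !finE // => /andP [Hj]; have [Hi Hn _] := ix1 Hj; rewrite Hj /=.
have := all2_nth Leaf Leaf (ix rs j) Hall (ltac:(by rewrite Hs)).
case: (nth Leaf us (ix rs j)) => [|a cs] //.
move=> /pre_nodel [ds [-> Hcd]] /= /orP [->//|H].
by rewrite (IH _ _ Hcd H) orbT.
Qed.

Lemma fin_down (u v : seq nat) us rs : all2 pre us rs -> fin us rs v -> fin rs rs u -> prefix u v -> fin us rs u.
Proof.
elim: u v us rs => [|j u IH] v us rs Hall //.
case: v => [|k v] //.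
rewrite prefix_cons => H1 H2 /andP [/eqP Ejk Hp]; subst k.
have Hs := all2_size Hall.
move: H1 H2; rewrite !finE // => /andP [Hj H1] /andP [_ H2]; rewrite Hj /=.
have [Hi Hn _] := ix1 Hj.
have := all2_nth Leaf Leaf (ix rs j) Hall (ltac:(by rewrite Hs)).
move: H1 H2; case: (nth Leaf us (ix rs j)) => [|a cs] //.
move=> H1 H2 /pre_nodel [ds [E Hcd]]; rewrite E /= in H1 H2 *.
case: u IH Hp H2 => [|x u] IH Hp H2 //.
case: v Hp H1 => [|y v] Hp H1 //.
rewrite /= in H1 H2.
by apply: (IH (y :: v)).
Qed.

Lemma fin_mono p us vs rs : all2 pre us vs -> all2 pre us rs -> all2 pre vs rs ->
  fin us rs p -> fin vs rs p.
Proof.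
elim: p us vs rs => [|j p IH] us vs rs Huv Hur Hvr //.
have Hs1 := all2_size Hur; have Hs2 := all2_size Hvr.
rewrite !finE // => /andP [Hj]; have [Hi Hn _] := ix1 Hj; rewrite Hj /=.
have := all2_nth Leaf Leaf (ix rs j) Huv (ltac:(by rewrite Hs1)).
have := all2_nth Leaf Leaf (ix rs j) Hur (ltac:(by rewrite Hs1)).
have := all2_nth Leaf Leaf (ix rs j) Hvr (ltac:(by rewrite Hs2)).
case: (nth Leaf us (ix rs j)) => [|a cs] //.
move=> H3 /pre_nodel [ds [E H2]] /pre_nodel [es [E' H1]].
rewrite E' E preE eqxx /= in H3 *.
by move=> /orP [->//|H]; rewrite (IH _ _ _ H1 H2 H3 H) orbT.
Qed.


Lemma fin_rev rs : forall us vs, all (wf ar) rs -> all2 pre us rs -> all2 pre vs rs ->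
  (forall p, fin us rs p -> fin vs rs p) -> all2 pre us vs.
Proof.
elim/forest_ind: rs => rs IH us vs Hw Hur Hvr Hsub.
have Hs1 := all2_size Hur; have Hs2 := all2_size Hvr.
apply: (all2_nthP Leaf Leaf); first by rewrite Hs1 Hs2.
move=> i Hi; rewrite Hs1 in Hi.
have Hu := all2_nth Leaf Leaf i Hur (ltac:(by rewrite Hs1)).
have Hv := all2_nth Leaf Leaf i Hvr (ltac:(by rewrite Hs2)).
have Wr := all_nthP Leaf Hw i Hi.
have Hin := nth_In Hi.
move: Hu Hv Wr Hin; case Er: (nth Leaf rs i) => [|b ds].
  by move=> /pre_leafr -> /pre_leafr ->.
move=> Hu Hv Wr Hin.
have Wv := pre_wf Hv Wr.
move: Hu Hsub; case E: (nth Leaf us i) => [|a cs] // Hu Hsub.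
have Hnl : nonleaf (nth Leaf rs i) by rewrite Er.
have [Hix Hc] := ix2 Hi Hnl.
have Hf : forall p, fin us rs (count (nonleaf (L:=A)) (take i rs) :: p) = (p == [::]) || fin cs ds p.
  by move=> p; rewrite finE // Hix E Er Hc.
have Hg : forall p, fin vs rs (count (nonleaf (L:=A)) (take i rs) :: p) =
   nonleaf (nth Leaf vs i) && ((p == [::]) || fin (children (nth Leaf vs i)) ds p).
  by move=> p; rewrite finE // Hix Er Hc.
have := Hsub [:: count (nonleaf (L:=A)) (take i rs)].
rewrite Hf Hg eqxx /= andbT => /(_ isT).
move: Hv Hg; case: (nth Leaf vs i) => [|b' es] // Hv Hg _.
move: Hu Hv; rewrite !preE => /andP [/eqP -> Hcd] /andP [/eqP -> Hed].
rewrite eqxx /=.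
apply: (IH _ Hin) => //=.
  by move: Wr => /= /andP [].
move=> [|k p] // H.
have := Hsub (count (nonleaf (L:=A)) (take i rs) :: k :: p).
by rewrite Hf Hg H orbT => /(_ isT).
Qed.

Fixpoint bt (I : pred (seq nat)) (j : nat) (r : tree A) : tree A :=
  match r with
  | Leaf => Leaf
  | Node a cs => if I [:: j] then
      Node a ((fix go cs k := match cs with
                | [::] => [::]
                | c :: cs' => bt (fun p => I (j :: p)) k c :: go cs' (k + nonleaf c)
                end) cs 0)
      else Leaf
  end.

Fixpoint bts (I : pred (seq nat)) cs k : seq (tree A) :=
  match cs with
  | [::] => [::]
  | c :: cs' => bt I k c :: bts I cs' (k + nonleaf c)
  end.

Lemma btE I j a cs : bt I j (Node a cs) =
  if I [:: j] then Node a (bts (fun p => I (j :: p)) cs 0) else Leaf.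
Proof. rewrite /=; case: (I [:: j]) => //; congr Node; move: 0; elim: cs => [|c cs IH] k //=; by rewrite IH. Qed.

Lemma size_bts I cs k : size (bts I cs k) = size cs.
Proof. by elim: cs k => [|c cs IH] k //=; rewrite IH. Qed.

Lemma nth_bts I cs k i : i < size cs ->
  nth Leaf (bts I cs k) i = bt I (k + count (nonleaf (L:=A)) (take i cs)) (nth Leaf cs i).
Proof.
elim: cs k i => [|c cs IH] k [|i] //= Hi; first by rewrite addn0.
by rewrite IH // addnA.
Qed.

Lemma bts_pre rs : forall I k, all (wf ar) rs -> all2 pre (bts I rs k) rs.
Proof.
elim/forest_ind: rs => rs IH I k Hw.
apply: (all2_nthP Leaf Leaf); first by rewrite size_bts.
move=> i; rewrite size_bts => Hi; rewrite nth_bts //.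
have Wr := all_nthP Leaf Hw i Hi.
have Hin := nth_In Hi.
move: Wr Hin; case: (nth Leaf rs i) => [|a cs] // Wr Hin.
rewrite btE; case: ifP => _ //.
rewrite preE eqxx /=; apply: (IH _ Hin).
by move: Wr => /= /andP [].
Qed.

Lemma bts_fin (p : seq nat) : forall (I : pred (seq nat)) rs, p != [::] ->
  (forall q, q != [::] -> I q -> fin rs rs q) ->
  (forall u v : seq nat, I v -> fin rs rs u -> prefix u v -> I u) ->
  fin (bts I rs 0) rs p = I p.
Proof.
elim: p => [|j p IH] I rs // _ H1 H2.
rewrite finE ?size_bts //.
case: (ltnP j (count (nonleaf (L:=A)) rs)) => Hj /=; last first.
  apply/esym/negbTE/negP => /(H1 (j :: p) isT); rewrite finE //.
  by rewrite ltnNge Hj.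
have [Hi Hn Hc] := ix1 Hj.
rewrite nth_bts // add0n Hc.
case E: (nth Leaf rs (ix rs j)) Hn => [|a cs] // _.
have Hrs : forall q, fin rs rs (j :: q) = (q == [::]) || fin cs cs q.
  by move=> q; rewrite finE // Hj E.
rewrite btE; case: ifP => HI /=; last first.
  apply/esym/negbTE/negP => Hjp.
  have := H2 [:: j] (j :: p) Hjp; rewrite Hrs eqxx prefix_cons eqxx /= HI.
  by move=> /(_ isT (prefix0s _)).
case: p IH => [|k p] IH; first by rewrite HI.
rewrite /=; apply: IH => //.
  move=> q Hq Iq; have := H1 (j :: q) isT Iq; rewrite Hrs.
  by case: q Hq {Iq}.
move=> u v Iv Hu Huv; apply: (H2 (j :: u) (j :: v)) => //.
  by rewrite Hrs Hu orbT.
by rewrite prefix_cons eqxx.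
Qed.

End Pre.

Section Graft.
Variables (A : eqType) (ar : A -> nat).
Implicit Types (t u v r s : tree A) (us vs rs cs ds : seq (tree A)).

Fixpoint grafts cs rs : seq (tree A) :=
  match cs with
  | [::] => [::]
  | c :: cs' => graft c (take (nleaves c) rs) :: grafts cs' (drop (nleaves c) rs)
  end.

Lemma graftE a cs rs : graft (Node a cs) rs = Node a (grafts cs rs).
Proof. reflexivity. Qed.

Fixpoint cut s u : seq (tree A) :=
  match s with
  | Leaf => [:: u]
  | Node _ cs => match u with
                 | Leaf => [::]
                 | Node _ ds => (fix go cs ds := match cs, ds with
                                   | c :: cs', d :: ds' => cut c d ++ go cs' ds'
                                   | _, _ => [::] end) cs ds
                 end
  end.

Fixpoint cuts cs ds : seq (tree A) :=
  match cs, ds with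
  | c :: cs', d :: ds' => cut c d ++ cuts cs' ds'
  | _, _ => [::]
  end.

Lemma cutE a cs b ds : cut (Node a cs) (Node b ds) = cuts cs ds.
Proof. reflexivity. Qed.

Lemma graft_pre s : forall rs, size rs = nleaves s -> all (wf ar) rs -> pre ar s (graft s rs).
Proof.
elim/tree_ind2: s => [|a cs IH] rs.
  by case: rs => [|r [|]] //= _; rewrite andbT.
rewrite graftE preE eqxx /=.
elim: cs rs IH => [|c cs IHc] rs IH Hs Hw //=.
have Hle : nleaves c <= size rs by rewrite Hs leq_addr.
have /andP [W1 W2] : all (wf ar) (take (nleaves c) rs) && all (wf ar) (drop (nleaves c) rs)
  by rewrite -all_cat cat_take_drop.
apply/andP; split.
  by apply: (IH c (or_introl erefl)); [rewrite size_takel | ].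
apply: IHc => //; first by move=> x Hx; apply: IH; right.
by rewrite size_drop Hs addKn.
Qed.

Lemma cut_graft s : forall rs, size rs = nleaves s -> cut s (graft s rs) = rs.
Proof.
elim/tree_ind2: s => [|a cs IH] rs.
  by case: rs => [|r [|]].
rewrite graftE cutE /=.
elim: cs rs IH => [|c cs IHc] rs IH Hs /=; first by rewrite (size0nil Hs).
have Hle : nleaves c <= size rs by rewrite Hs leq_addr.
rewrite (IH c (or_introl erefl)); last by rewrite size_takel.
rewrite IHc; first by rewrite cat_take_drop.
  by move=> x Hx; apply: IH; right.
by rewrite size_drop Hs addKn.
Qed.

Lemma pre_cut s : forall u, pre ar s u ->
  [/\ size (cut s u) = nleaves s, all (wf ar) (cut s u) & graft s (cut s u) = u].
Proof.
elim/tree_ind2: s => [|a cs IH] u.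
  by move=> /= H; rewrite H.
move=> /pre_nodel [ds [-> H]].
rewrite cutE graftE /=.
elim: cs ds IH H => [|c cs IHc] [|d ds] IH //= /andP [H1 H2].
have [S1 W1 G1] := IH c (or_introl erefl) d H1.
have [S2 W2 G2] := IHc ds (fun x Hx => IH x (or_intror Hx)) H2.
rewrite size_cat S1 S2 all_cat W1 W2; split => //.
rewrite take_size_cat // drop_size_cat // G1.
by case: G2 => ->.
Qed.

Lemma pre_cut2 s : forall u v, pre ar s u -> pre ar s v ->
  pre ar u v = all2 (pre ar) (cut s u) (cut s v).
Proof.
elim/tree_ind2: s => [|a cs IH] u v.
  by move=> _ _ /=; rewrite andbT.
move=> /pre_nodel [du [-> Hu]] /pre_nodel [dv [-> Hv]].
rewrite cutE cutE preE eqxx /=.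
elim: cs du dv IH Hu Hv => [|c cs IHc] [|d1 du] [|d2 dv] IH //= /andP [H1 H2] /andP [H3 H4].
rewrite all2_cat; last by have [S1 _ _] := pre_cut H1; have [S3 _ _] := pre_cut H3; rewrite S1 S3.
rewrite (IH c (or_introl erefl) d1 d2 H1 H3).
by rewrite (IHc du dv (fun x Hx => IH x (or_intror Hx)) H2 H4).
Qed.

End Graft.

Lemma all2_pre_wf (A : eqType) (ar : A -> nat) us rs :
  all2 (pre ar) us rs -> all (wf ar) rs -> all (wf ar) us.
Proof.
elim: us rs => [|u us IH] [|r rs] //= /andP [H1 H2] /andP [W1 W2].
by rewrite (pre_wf H1 W1) (IH _ H2 W2).
Qed.

Theorem proposition3p10 (A : finType) (ar : A -> nat)
    (har : forall a : A, 0 < ar a) (s t : tree A) (rs : seq (tree A)) :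
  wf ar s -> wf ar t -> tprefix ar s t -> is_diff ar s t rs ->
  iso_to_J (interval ar s t) (tprefix ar) (sh (diamond rs)).
Proof.
move=> Hws Hwt _ [Hsz Hwrs Hg].
have Ers : cut s t = rs by rewrite -Hg cut_graft.
have tp_pre : forall x y, tprefix ar x y <-> pre ar x y.
  move=> x y; split.
    by case=> zs [Hz Hw <-]; apply: graft_pre.
  move=> H; have [S W G] := pre_cut H; by exists (cut x y).
have Hst : pre ar s t by apply/tp_pre; exists rs.
exists (fun u => fin (cut s u) rs); split.
- move=> u [Wu /tp_pre Hsu /tp_pre Hut].
  have Hall : all2 (pre ar) (cut s u) rs by rewrite -Ers -pre_cut2.
  split.
    by move=> p Hp; rewrite sh_diamond link; apply: fin_sub Hall Hp.
  by move=> p q Hq; rewrite sh_diamond link => Hp Hle; apply: fin_down Hall Hq Hp Hle.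
- move=> u v [Wu /tp_pre Hsu /tp_pre Hut] [Wv /tp_pre Hsv /tp_pre Hvt].
  have Hu : all2 (pre ar) (cut s u) rs by rewrite -Ers -pre_cut2.
  have Hv : all2 (pre ar) (cut s v) rs by rewrite -Ers -pre_cut2.
  rewrite tp_pre (pre_cut2 Hsu Hsv); split.
    by move=> H p Hp; apply: (fin_mono H Hu Hv Hp).
  move=> H; apply: (fin_rev Hwrs Hu Hv) => p Hp; exact: (H p Hp).
- move=> I [HI1 HI2].
  set us := bts I rs 0.
  have Hpre : all2 (pre ar) us rs by apply: bts_pre.
  have Hsize : size us = nleaves s by rewrite size_bts.
  have Hwu : all (wf ar) us by apply: all2_pre_wf Hpre Hwrs.
  have Hsu : pre ar s (graft s us) by apply: graft_pre.
  have Ecut : cut s (graft s us) = us by apply: cut_graft.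
  have Hut : pre ar (graft s us) t by rewrite (pre_cut2 Hsu Hst) Ecut Ers.
  exists (graft s us).
    split; [exact: pre_wf Hut Hwt | exact/tp_pre | exact/tp_pre].
  move=> p; change (fin (cut s (graft s us)) rs p = I p); rewrite Ecut.
  case: p => [|j p].
    by apply/esym/negbTE/negP => /HI1; rewrite sh_diamond link.
  apply: bts_fin => //.
    by move=> q _ Iq; rewrite -link -sh_diamond; apply: HI1.
  by move=> x y Iy; rewrite -link -sh_diamond => Hx Hxy; apply: (HI2 x y).
Qed.
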